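(* Let $(\gamma_{n})_{n\in\mathbb{N}}$ be nonnegative integrable functions on $[0,\infty)$ with $\rho:=\sup_{n\in\mathbb{N}}\int_{0}^{\infty}\gamma_{n}(t)dt<1$, and let $a(t)>0$ satisfy $a(t)/t\to0$ as $t\to\infty$. For $M\in\mathbb{N}$, $\theta\in\mathbb{R}$ and $t\ge0$ define $G_{M}(t,\theta,M)=\theta$ and recursively, for $0\le n\le M-1$, $$G_{n}(t,\theta,M)=\theta+\int_{0}^{t}\left(e^{G_{n+1}(t-s,\theta,M)}-1\right)\gamma_{n}(s)\,ds.$$ Then for any fixed $\theta\in\mathbb{R}$ there is some $k_{1}\ge\frac{1}{1-\rho}$ such that for all sufficiently large $t$, $$\left|G_{n}\left(s,\tfrac{a(t)}{t}\theta,M\right)\right|\le k_{1}\frac{a(t)}{t}|\theta|$$ uniformly for $1\le n\le M$, $M\in\mathbb{N}$ and $s\ge0$. *)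

(* Defs.v *)
From HB Require Import structures.
From mathcomp Require Import all_boot all_order all_algebra.
From mathcomp Require Import all_classical all_reals all_analysis.
Set Implicit Arguments. Unset Strict Implicit. Unset Printing Implicit Defensive.
Import Order.TTheory GRing.Theory Num.Theory.
Import numFieldNormedType.Exports.
Local Open Scope classical_set_scope.
Local Open Scope ring_scope.

(* Gaux gam M k t th = G_{M-k}(t, th, M):
   Gaux _ M 0 t th = th  (i.e. G_M = th), and for k+1 (n = M-(k+1)),
   G_n(t) = th + \int_[0,t] (exp(G_{n+1}(t-s)) - 1) gam_n(s) ds. *)
Fixpoint Gaux (R : realType) (gam : nat -> R -> R) (M : nat) (k : nat)
  (t th : R) : R :=
  match k with
  | 0%N => th
  | k'.+1 => th + Rintegral (@lebesgue_measure R) `[0, t]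
      (fun s => (expR (Gaux gam M k' (t - s) th) - 1) * gam (M - k'.+1)%N s)
  end.

(* G gam n t th M = G_n(t, th, M), meaningful for n <= M. *)
Definition G (R : realType) (gam : nat -> R -> R) (n : nat) (t th : R)
  (M : nat) : R := Gaux gam M (M - n)%N t th.

(* Main.v *)
From HB Require Import structures.
From mathcomp Require Import all_boot all_order all_algebra.
From mathcomp Require Import all_classical all_reals all_analysis.
From mathcomp Require Import ring lra.
Require Import Defs.
Import Order.TTheory GRing.Theory Num.Theory.
Import numFieldNormedType.Exports.
Local Open Scope classical_set_scope.
Local Open Scope ring_scope.

Lemma le_integral_nm (R : realType) (D : set R) (f g : R -> \bar R) :
  (forall x, D x -> (0 <= f x)%E) -> (forall x, D x -> (f x <= g x)%E) ->
  (\int[@lebesgue_measure R]_(x in D) f x <= \int[@lebesgue_measure R]_(x in D) g x)%E.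
Proof.
move=> f0 fg.
have g0 : forall x, D x -> (0 <= g x)%E by move=> x Dx; exact: le_trans (f0 _ Dx) (fg _ Dx).
rewrite (ge0_integralE (@lebesgue_measure R) f0) (ge0_integralE (@lebesgue_measure R) g0) /=.
apply: le_ereal_sup => _ [h Hh <-]; exists h => // x.
apply: le_trans (Hh x) _.
rewrite /patch; case: ifP => // /set_mem Dx; exact: fg.
Qed.

Lemma bound_Rint (R : realType) (D : set R) (f g : R -> R) (c r : R) :
  measurable D -> 0 <= c ->
  (forall u, D u -> 0 <= g u) -> (@lebesgue_measure R).-integrable D (EFin \o g) ->
  (forall u, D u -> `|f u| <= c * g u) ->
  (\int[@lebesgue_measure R]_(x in D) (g x)%:E <= r%:E)%E ->
  `|Rintegral (@lebesgue_measure R) D f| <= c * r.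
Proof.
move=> mD c0 g0 /measurable_int mg fg gr.
have Hb : (\int[@lebesgue_measure R]_(x in D) (c * g x)%:E <= (c * r)%:E)%E.
  under eq_integral do rewrite EFinM.
  rewrite ge0_integralZl_EFin //.
  by rewrite EFinM; apply: lee_wpmul2l.
have Hp : forall h : R -> \bar R, (forall u, D u -> 0 <= h u)%E ->
    (forall u, D u -> h u <= (c * g u)%:E)%E ->
    (0 <= \int[@lebesgue_measure R]_(x in D) h x <= (c * r)%:E)%E.
  move=> h h0 hc; apply/andP; split; first exact: integral_ge0.
  apply: le_trans Hb; exact: le_integral_nm.
rewrite /Rintegral integralE.
have cg0 u : D u -> (0 <= (c * g u)%:E)%E by move=> Du; rewrite lee_fin mulr_ge0 // g0.
set F := (fun y => (f y)%:E).
have hP : forall u, D u -> (F^\+ u <= (c * g u)%:E)%E.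
  move=> u Du; rewrite funeposE ge_max cg0 // andbT lee_fin.
  exact: le_trans (ler_norm _) (fg _ Du).
have hN : forall u, D u -> (F^\- u <= (c * g u)%:E)%E.
  move=> u Du; rewrite funenegE ge_max cg0 // andbT /F -EFinN lee_fin.
  apply: le_trans _ (fg _ Du); rewrite -normrN; exact: ler_norm.
have /andP[P0 P1] := Hp (F^\+)%E (fun u _ => funepos_ge0 _ u) hP.
have /andP[N0 N1] := Hp (F^\-)%E (fun u _ => funeneg_ge0 _ u) hN.
move: P0 P1 N0 N1.
case: (\int[lebesgue_measure]_(x in D) F^\+ x)%E => [p| |];
case: (\int[lebesgue_measure]_(x in D) F^\- x)%E => [n| |] //=.
rewrite !lee_fin => p0 p1 n0 n1.
by rewrite ler_norml; apply/andP; split; lra.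
Qed.

Lemma key (R : realType) (gam : nat -> R -> R) (rho x K : R) (M : nat) :
  (forall n t, 0 <= t -> 0 <= gam n t) ->
  (forall n, (@lebesgue_measure R).-integrable `[0%R, +oo[ (EFin \o gam n)) ->
  (forall n, (\int[@lebesgue_measure R]_(u in `[0%R, +oo[) (gam n u)%:E <= rho%:E)%E) ->
  `|x| <= K -> `|x| + (expR K - 1) * rho <= K ->
  forall k s, `|Gaux gam M k s x| <= K.
Proof.
move=> g0 gi gr xK HK k; elim: k => [|k IH] s /=; first by [].
apply: le_trans (ler_normD _ _) _.
have K0 : 0 <= K by apply: le_trans xK.
have c0 : 0 <= expR K - 1.
  by have := expR_ge1Dx K; lra.
set n := (M - k.+1)%N.
have sub : `[0%R, s] `<=` `[0%R, +oo[.
  by move=> u /=; rewrite !in_itv /= => /andP[-> _].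
have D0 : forall u, u \in `[0%R, s] -> 0 <= u.
  by move=> u; rewrite in_itv /= => /andP[].
have HB : `|Rintegral (@lebesgue_measure R) `[0%R, s]
   (fun u => (expR (Gaux gam M k (s - u) x) - 1) * gam n u)| <= (expR K - 1) * rho.
  apply: (@bound_Rint R _ _ (gam n)) => //.
  - by move=> u /D0 /g0.
  - exact: integrableS (gi n).
  - move=> u Du; rewrite normrM (ger0_norm (g0 _ _ (D0 _ Du))).
    apply: ler_wpM2r; first exact: g0 (D0 _ Du).
    have := IH (s - u); set y := Gaux _ _ _ _ _ => Hy.
    have := expR_ge1Dx y; have := ler_expR y K.
    move: Hy; rewrite ler_norml => /andP[Hy1 Hy2].
    rewrite Hy2 /= => Hy3 Hy4.
    rewrite ler_norml; apply/andP; split; last lra.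
    have := expR_ge1Dx K; lra.
  - apply: le_trans (gr n).
    apply: ge0_subset_integral => //.
    + exact: measurable_int (gi n).
    + by move=> u /= /[!in_itv] /= /andP[u0 _]; rewrite lee_fin g0.
lra.
Qed.

Theorem lemma4p7 (R : realType) (gam : nat -> R -> R) (rho : R)
  (a : R -> R) (th : R) :
  (forall n t, 0 <= t -> 0 <= gam n t) ->
  (forall n, (@lebesgue_measure R).-integrable `[0%R, +oo[ (EFin \o gam n)) ->
  ereal_sup (range (fun n => (\int[@lebesgue_measure R]_(x in `[0%R, +oo[)
                                (gam n x)%:E)%E)) = rho%:E ->
  rho < 1 ->
  (forall t, 0 < t -> 0 < a t) ->
  (a t / t @[t --> +oo] --> 0) ->
  exists k1 : R, 1 / (1 - rho) <= k1 /\
    \forall t \near +oo, forall (M n : nat) (s : R),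
      (1 <= n <= M)%N -> 0 <= s ->
      `|G gam n s (a t / t * th) M| <= k1 * (a t / t) * `|th|.
Proof.
move=> g0 gi hsup rho1 a0 acvg.
have gr n : (\int[@lebesgue_measure R]_(u in `[0%R, +oo[) (gam n u)%:E <= rho%:E)%E.
  by rewrite -hsup; apply: ereal_sup_ubound; exists n.
have rho0 : 0 <= rho.
  rewrite -lee_fin; apply: le_trans (gr 0%N); apply: integral_ge0.
  by move=> u /= /[!in_itv] /= /andP[u0 _]; rewrite lee_fin g0.
have r1 : 0 < 1 - rho by lra.
set k1 := 2 / (1 - rho).
have hk1 : k1 * (1 - rho) = 2 by rewrite /k1 mulfVK // gt_eqF.
have k1ge : 1 <= k1.
  have : 1 * (1 - rho) <= k1 * (1 - rho) by rewrite hk1; lra.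
  by rewrite ler_pM2r.
have k10 : 0 < k1 by lra.
exists k1; split.
  by rewrite ler_pM2r ?invr_gt0 //; lra.
set m := `|th|.
have m0 : 0 <= m := normr_ge0 th.
set eps := (1 - rho) / 2 / (k1 * (m + 1)).
have hmk : 0 < k1 * (m + 1) by apply: mulr_gt0 => //; lra.
have eps0 : 0 < eps by apply: divr_gt0 => //; lra.
have heps : k1 * (m + 1) * eps = (1 - rho) / 2.
  by rewrite /eps mulrC mulfVK // gt_eqF.
have := (cvgr0Pnorm_lt _).1 acvg eps eps0.
have : \forall t \near +oo, (0:R) < t by apply: nbhs_pinfty_gt; rewrite real0.
move=> H1 H2; near=> t => M n s _ _.
have t0 : 0 < t by near: t; exact: H1.
have qe : `|a t / t| < eps by near: t; apply: H2.
set q := a t / t in qe *.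
have q0 : 0 < q by apply: divr_gt0 => //; exact: a0.
rewrite gtr0_norm // in qe.
set K := k1 * q * m.
have hKm : K <= (1 - rho) / 2.
  rewrite -heps /K.
  have : k1 * q * (m + 1) <= k1 * (m + 1) * eps.
    by rewrite mulrAC; apply: ler_wpM2l; [apply: ltW|apply: ltW].
  nra.
have K0 : 0 <= K by rewrite /K; apply: mulr_ge0 => //; apply: mulr_ge0; lra.
have xe : `|q * th| = q * m by rewrite normrM gtr0_norm.
have hz : K * (1 - rho) = 2 * (q * m).
  by rewrite /K -hk1; ring.
rewrite /G; apply: (@key R gam rho (q * th) K M) => //; rewrite xe.
  by rewrite /K; nra.
set y := expR K.
have hy : y * (1 - K) <= 1.
  have e1 := expR_ge1Dx (- K).
  have y0 : 0 < y := expR_gt0 K.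
  have : y * (1 - K) <= y * expR (- K) by apply: ler_wpM2l; lra.
  by rewrite expRN mulfV ?gt_eqF.
have h1 : 2 * rho <= (1 + rho) * (1 - K) by nra.
have h2 : rho * ((y - 1) * (1 - K)) <= rho * K by apply: ler_wpM2l => //; nra.
have h3 : rho * (y - 1) * (1 - K) <= (K * (1 + rho) / 2) * (1 - K) by nra.
have h4 : rho * (y - 1) <= K * (1 + rho) / 2.
  by move: h3; rewrite ler_pM2r //; lra.
nra.
Unshelve. all: by end_near.
Qed.
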